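(* Let $n\ge 2$ and let $L = sl(n,\mathbb{C}) = \{X\in\mathbb{C}^{n\times n} \mid \operatorname{tr} X = 0\}$. Let $g$ be an inner automorphism of $L$ of order $2$, i.e. $g(X) = AXA^{-1}$ for some $A\in SL(n,\mathbb{C})$, with $g\neq \mathrm{Id}$ and $g^2=\mathrm{Id}$, and let $L = L_0 \oplus L_1$ be the associated $\mathbb{Z}_2$-grading, where $L_0 = \{X : g(X)=X\}$ and $L_1=\{X: g(X) = -X\}$. Then every finite-dimensional irreducible representation $r: L\to \operatorname{End} V$ is compatible with this $\mathbb{Z}_2$-grading, i.e. there exists a decomposition $V = V_0\oplus V_1$ into subspaces such that $r(X_i)V_j\subseteq V_{i+j}$ for all $i,j\in\mathbb{Z}_2$ and all $X_i\in L_i$.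
   Context: For a Lie algebra $L$ with a $G$-grading $L=\bigoplus_{i\in G}L_i$ ($G$ an abelian group, $[L_i,L_j]\subseteq L_{i+j}$), a representation $r:L\to\operatorname{End}V$ is called compatible with the $G$-grading if there is a direct sum decomposition $V=\bigoplus_{i\in G}V_i$ with $r(X_i)V_j\subseteq V_{i+j}$ for all $i,j\in G$ and all $X_i\in L_i$. *)

(* Defs.v *)
From HB Require Import structures.
From mathcomp Require Import all_boot all_order all_algebra.
From mathcomp Require Import complex.
From mathcomp Require Import reals.
Set Implicit Arguments. Unset Strict Implicit. Unset Printing Implicit Defensive.
Import Order.TTheory GRing.Theory Num.Theory.
Local Open Scope ring_scope.

Section SlDefs.
Variable F : fieldType.

Definition in_sl (n : nat) (X : 'M[F]_n) : Prop := \tr X = 0.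

Definition lie_br (n : nat) (X Y : 'M[F]_n) : 'M[F]_n := X *m Y - Y *m X.

(* r : sl(n) -> End(F^m) is a representation (values of r outside sl(n)
   are irrelevant): linear on sl(n) and preserving brackets. Endomorphisms
   of V = F^m are m x m matrices acting on column vectors. *)
Definition is_sl_rep (n m : nat) (r : 'M[F]_n -> 'M[F]_m) : Prop :=
  (forall (a : F) (X Y : 'M[F]_n), in_sl X -> in_sl Y ->
     r (a *: X + Y) = a *: r X + r Y) /\
  (forall X Y : 'M[F]_n, in_sl X -> in_sl Y ->
     r (lie_br X Y) = lie_br (r X) (r Y)).

(* A subspace of V = F^m is represented (mxalgebra style) by the row space of
   a matrix U; a column vector v belongs to it iff v^T lies in the row space.
   M maps subspace U into subspace W iff (M v)^T = v^T M^T lies in W for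
   every v in U. *)
Definition maps_into (m : nat) (M U W : 'M[F]_m) : Prop :=
  (U *m M^T <= W)%MS.

Definition irreducible_rep (n m : nat) (r : 'M[F]_n -> 'M[F]_m) : Prop :=
  (0 < m)%N /\
  forall U : 'M[F]_m,
    (forall X : 'M[F]_n, in_sl X -> maps_into (r X) U U) ->
    (U == (0 : 'M[F]_m))%MS \/ row_full U.

Definition grade0 (n : nat) (A X : 'M[F]_n) : Prop :=
  in_sl X /\ A *m X *m invmx A = X.
Definition grade1 (n : nat) (A X : 'M[F]_n) : Prop :=
  in_sl X /\ A *m X *m invmx A = - X.

Definition compatible_Z2 (n m : nat) (A : 'M[F]_n) (r : 'M[F]_n -> 'M[F]_m)
  : Prop :=
  exists V0 V1 : 'M[F]_m,
    mxdirect (V0 + V1) /\ row_full (V0 + V1)%MS /\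
    (forall X, grade0 A X -> maps_into (r X) V0 V0 /\ maps_into (r X) V1 V1) /\
    (forall X, grade1 A X -> maps_into (r X) V0 V1 /\ maps_into (r X) V1 V0).

End SlDefs.

(* Main.v *)
Require Import Defs.
From HB Require Import structures.
From mathcomp Require Import all_boot all_order all_algebra.
From mathcomp Require Import complex.
From mathcomp Require Import reals.
From mathcomp Require Import complex.
From mathcomp Require Import reals.
Import Order.TTheory GRing.Theory Num.Theory.
Local Open Scope ring_scope.
Definition zpar {R : realType} (z : R[i]) : bool :=
  odd (absz (Num.floor (complex.Re z))).

Lemma odd_abs_succ (k : int) : odd (absz (k + 1)) = ~~ odd (absz k).
Proof.
case: k => n.
  by rewrite -PoszD addn1 /= .
case: n => [|n] //=.
by rewrite subSS subn0 negbK.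
Qed.

Lemma zparD1 (R : realType) (z : R[i]) : zpar (z + 1) = ~~ zpar z.
Proof.
rewrite /zpar.
have -> : complex.Re (z + 1) = complex.Re z + 1 by case: z.
by rewrite floorDrz ?intr_int // floor1 odd_abs_succ.
Qed.

Lemma zparB1 (R : realType) (z : R[i]) : zpar (z + -1) = ~~ zpar z.
Proof. by rewrite -[in RHS](subrK 1 z) zparD1 negbK. Qed.
Section Rep.
Variables (F : fieldType) (m' : nat).
Local Notation m := m'.+1.

Lemma horner_shift (g y : 'M[F]_m) (c : F) (rs : seq F) (P : pred F) :
  y *m g = (g + c%:M) *m y ->
  y *m horner_mx g (\prod_(mu <- rs | P mu) ('X - (mu + c)%:P)) =
  horner_mx g (\prod_(mu <- rs | P mu) ('X - mu%:P)) *m y.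
Proof.
move=> hy; rewrite !rmorph_prod.
apply: (big_ind2 (fun a b => y *m a = b *m y)).
- by rewrite mulmx1 mul1mx.
- move=> a1 a2 b1 b2 h1 h2.
  by rewrite -!mulmxE mulmxA h1 -mulmxA h2 mulmxA.
move=> mu _; rewrite !rmorphB /= !horner_mx_X !horner_mx_C.
rewrite mulmxBr mulmxBl hy scalar_mxC mulmxDl raddfD /= mulmxDl.
by rewrite opprD addrACA subrr addr0.
Qed.

Lemma ker_shift (g y : 'M[F]_m) (p q s : {poly F}) :
  y *m horner_mx g s = horner_mx g p *m y ->
  horner_mx g (p * q) = 0 -> coprimep p s ->
  (kermxpoly g p *m y <= kermxpoly g q)%MS.
Proof.
move=> hys hpq /Bezout_eq1_coprimepP [[u v]] /= huv.
apply/sub_kermxP; rewrite /kermxpoly.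
set K := kermx (horner_mx g p).
have KP : K *m horner_mx g p = 0 := mulmx_ker _.
have -> : horner_mx g q = horner_mx g ((u * p + v * s) * q) by rewrite huv mul1r.
rewrite mulrDl rmorphD mulmxDr.
have -> : u * p * q = u * (p * q) by rewrite mulrA.
have -> : v * s * q = s * (v * q) by rewrite mulrAC mulrC.
rewrite [X in _ *m X + _]rmorphM /= hpq mulr0 mulmx0 add0r rmorphM -!mulmxE.
by rewrite mulmxA -(mulmxA K) [y *m _]hys mulmxA KP !mul0mx.
Qed.

End Rep.

Lemma coprime_prods (F : fieldType) (rs : seq F) (P Q : pred F) (f : F -> F) :
  (forall z w, P z -> Q w -> f w != z) ->
  coprimep (\prod_(z <- rs | P z) ('X - z%:P))
           (\prod_(w <- rs | Q w) ('X - (f w)%:P)).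
Proof.
move=> H.
apply: (big_ind (fun q => coprimep (\prod_(z <- rs | P z) ('X - z%:P)) q)).
- exact: coprimep1.
- by move=> a b ha hb; rewrite coprimepMr ha hb.
move=> w Qw; rewrite coprimep_XsubC -big_filter root_prod_XsubC mem_filter.
apply/negP => /andP[Pfw _].
by move: (H _ _ Pfw Qw); rewrite eqxx.
Qed.

Lemma grading (F : closedFieldType) (par : F -> bool) (c0 : F)
  (hp1 : forall z, par (z + c0) = ~~ par z)
  (hm1 : forall z, par (z + - c0) = ~~ par z) (m' : nat) (g : 'M[F]_m'.+1) :
  exists V0 V1 : 'M[F]_m'.+1,
  mxdirect (V0 + V1) /\ row_full (V0 + V1)%MS /\
  (forall y, y *m g = g *m y -> (V0 *m y <= V0)%MS /\ (V1 *m y <= V1)%MS) /\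
  (forall y (c : F), (c = c0 \/ c = - c0) -> y *m g = (g + c%:M) *m y ->
     (V0 *m y <= V1)%MS /\ (V1 *m y <= V0)%MS).
Proof.
have [rs hrs] := closed_field_poly_normal (char_poly g).
move: hrs; rewrite (monicP (char_poly_monic g)) scale1r => hrs.
pose q0 := \prod_(z <- rs | ~~ par z) ('X - z%:P).
pose q1 := \prod_(z <- rs | par z) ('X - z%:P).
have hch : char_poly g = q1 * q0.
  by rewrite hrs (bigID par xpredT) /=.
have cop01 : coprimep q0 q1.
  by apply: coprime_prods => z w pz qw; apply/eqP => wz; move: pz; rewrite -wz qw.
have CH01 : horner_mx g (q0 * q1) = 0 by rewrite mulrC -hch Cayley_Hamilton.
have CH10 : horner_mx g (q1 * q0) = 0 by rewrite -hch Cayley_Hamilton.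
exists (kermxpoly g q0), (kermxpoly g q1).
split; first by apply/mxdirect_addsP; apply: mxdirect_kermxpoly.
split.
  rewrite -sub1mx -(kermxpolyM g cop01) /kermxpoly CH01.
  by rewrite kermx0 submx_refl.
split.
  move=> y hy; split; apply: comm_mx_stable_kermxpoly; exact/esym.
move=> y c hc hy.
have hpc : forall z, par (z + c) = ~~ par z by case: hc => ->.
split.
  apply: (@ker_shift _ _ g y _ _ (\prod_(z <- rs | ~~ par z) ('X - (z + c)%:P))) => //.
    exact: horner_shift.
  apply: coprime_prods => z w pz qw; apply/eqP => /= wz.
  by move: pz qw; rewrite -wz hpc; case: (par w).
apply: (@ker_shift _ _ g y _ _ (\prod_(z <- rs | par z) ('X - (z + c)%:P))) => //.
  exact: horner_shift.
apply: coprime_prods => z w pz qw; apply/eqP => /= wz.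
by move: pz qw; rewrite -wz hpc; case: (par w).
Qed.
Lemma scalar_of_comm (C : fieldType) n' (M : 'M[C]_(n'.+2)) :
  (forall X : 'M_(n'.+2), \tr X = 0 -> M *m X = X *m M) -> M = (M ord0 ord0)%:M.
Proof.
move=> hM.
have tr0 (i j : 'I_(n'.+2)) : i != j -> \tr (delta_mx i j : 'M[C]_(n'.+2)) = 0.
  move=> ij; rewrite /mxtrace big1 // => t _; rewrite mxE.
  case: (t =P i) => [ti|] /=; last by [].
  by rewrite -ti in ij; rewrite (negbTE ij).
have key (i j k : 'I_(n'.+2)) : i != j -> M k i = (k == i)%:R * M j j.
  move=> ij; have := congr1 (fun Z : 'M[C]_(n'.+2) => Z k j) (hM _ (tr0 i j ij)).
  rewrite !mxE (bigD1 i) //= big1 => [|t /negbTE ti]; last by rewrite mxE ti mulr0.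
  rewrite (bigD1 j) //= big1 => [|t /negbTE tj]; last by rewrite mxE tj andbF mul0r.
  by rewrite !mxE !eqxx mulr1 !addr0 !andbT => ->.
have hd (j : 'I_(n'.+2)) : M j j = M ord0 ord0.
  have [->//|j0] := eqVneq j ord0.
  by rewrite (key ord0 j ord0) ?eqxx ?mul1r // eq_sym.
apply/matrixP => k l; rewrite mxE.
rewrite (key l (lift l ord0) k (neq_lift l ord0)) hd.
by case: (k == l); rewrite ?mul1r ?mul0r.
Qed.
Lemma lie_side (C : numClosedFieldType) n' (A : 'M[C]_(n'.+2)) :
  A \in unitmx ->
  (forall X, \tr X = 0 -> A *m (A *m X *m invmx A) *m invmx A = X) ->
  exists H : 'M[C]_(n'.+2), \tr H = 0 /\
  (forall X, \tr X = 0 -> A *m X *m invmx A = X -> lie_br H X = 0) /\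
  (forall X, \tr X = 0 -> A *m X *m invmx A = - X ->
     exists Xp Xm, \tr Xp = 0 /\ \tr Xm = 0 /\ X = 2^-1 *: Xp + 2^-1 *: Xm /\
        lie_br H Xp = 2 *: Xp /\ lie_br H Xm = (- 2) *: Xm).
Proof.
move=> uA hinv.
have hAA : forall X, \tr X = 0 -> (A *m A) *m X = X *m (A *m A).
  move=> X tX; rewrite -{2}(hinv X tX).
  rewrite mulmxA mulmxKV // -[A *m (A *m X *m invmx A) *m A]mulmxA mulmxKV //.
  by rewrite mulmxA.
have hM := @scalar_of_comm _ _ (A *m A) hAA.
move: hM; set c := (A *m A) ord0 ord0 => hM.
have c0 : c != 0.
  apply/eqP => c0.
  have : \det (A *m A) = 0 by rewrite hM c0 det_scalar expr0n.
  rewrite det_mulmx => /eqP; rewrite mulf_eq0 orbb => /eqP dA.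
  by move: uA; rewrite unitmxE dA unitr0.
pose s := sqrtC c.
have s0 : s != 0 by rewrite sqrtC_eq0.
have ss : s * s = c by rewrite -expr2 sqrtCK.
pose B := s^-1 *: A.
have hBB : B *m B = 1%:M.
  rewrite /B -scalemxAl -scalemxAr scalerA hM scale_scalar_mx; congr (_%:M).
  by rewrite -ss mulrACA mulVf // mulr1.
have c0X : forall X, A *m X *m invmx A = X -> B *m X = X *m B.
  move=> X E; have E' : A *m X = X *m A by rewrite -{2}E mulmxKV.
  by rewrite /B -scalemxAl -scalemxAr E'.
have c1X : forall X, A *m X *m invmx A = - X -> B *m X = - (X *m B).
  move=> X E; have E' : A *m X = - (X *m A) by rewrite -mulNmx -E mulmxKV.
  by rewrite /B -scalemxAl -scalemxAr E' scalerN.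
pose H := B - (\tr B / (n'.+2)%:R)%:M.
exists H.
have hbr : forall Y, lie_br H Y = lie_br B Y.
  move=> Y; rewrite /lie_br /H mulmxBl mulmxBr scalar_mxC.
  by rewrite opprB addrA subrK.
have n0 : (n'.+2)%:R != 0 :> C by rewrite pnatr_eq0.
split.
  rewrite /H raddfB /= mxtrace_scalar -[_ *+ n'.+2]mulr_natr.
  by rewrite (divfK n0) subrr.
split.
  by move=> X tX E; rewrite hbr /lie_br c0X // subrr.
move=> X tX E; have hX := c1X X E.
pose Y := B *m X.
have hBY : B *m Y = X by rewrite /Y mulmxA hBB mul1mx.
have hXB : X *m B = - Y by rewrite /Y hX opprK.
have hYB : Y *m B = - X by rewrite /Y -mulmxA hXB mulmxN hBY.
have tY : \tr Y = 0.
  have e : \tr Y = - \tr Y by rewrite {1}/Y [in LHS]mxtrace_mulC hXB raddfN.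
  have : \tr Y *+ 2 == 0 by rewrite mulr2n {1}e addNr.
  by rewrite mulrn_eq0 /= => /eqP.
exists (X + Y), (X - Y).
split; first by rewrite raddfD /= tX tY addr0.
split; first by rewrite raddfB /= tX tY subr0.
split.
  rewrite -scalerDr addrACA subrr addr0 -mulr2n -scaler_nat scalerA mulVf.
    by rewrite scale1r.
  by rewrite pnatr_eq0.
split.
  rewrite hbr /lie_br mulmxDr mulmxDl hBY hXB hYB.
  by rewrite -opprD opprK scaler_nat mulr2n [Y + X]addrC.
rewrite hbr /lie_br mulmxBr mulmxBl hBY hXB hYB.
rewrite scaleNr scaler_nat mulr2n -/Y !opprD !opprK [- X + Y]addrC.
by [].
Qed.

Theorem theorem2 (R : realType) (n m : nat) (A : 'M[R[i]]_n)
  (r : 'M[R[i]]_n -> 'M[R[i]]_m) :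
  (2 <= n)%N ->
  \det A = 1 ->
  (exists X : 'M[R[i]]_n, in_sl X /\ A *m X *m invmx A <> X) ->
  (forall X : 'M[R[i]]_n, in_sl X ->
     A *m (A *m X *m invmx A) *m invmx A = X) ->
  is_sl_rep r ->
  irreducible_rep r ->
  compatible_Z2 A r.
Proof.
move=> hn hdet _ hinv [hlin hbr] [hm hirr].
case: n hn A r hdet hinv hlin hbr hirr => [|[|n']] // _ A r hdet hinv hlin hbr hirr.
case: m hm r hlin hbr hirr => [//|m'] _ r hlin hbr hirr.
have uA : A \in unitmx by rewrite unitmxE hdet unitr1.
have [H [tH [hL0 hL1]]] := @lie_side _ _ A uA hinv.
have t0 : in_sl (0 : 'M[R[i]]_(n'.+2)) by rewrite /in_sl mxtrace0.
have r0 : r 0 = 0.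
  have e := hlin 1 0 0 t0 t0; rewrite addr0 !scale1r in e.
  have e2 : r 0 + 0 = r 0 + r 0 by rewrite addr0 {1}e.
  exact: (esym (addrI _ e2)).
have hsc : forall a X, in_sl X -> r (a *: X) = a *: r X.
  by move=> a X tX; have := hlin a X 0 tX t0; rewrite !addr0 r0 addr0.
set h := r H.
have two0 : (2 : R[i]) != 0 by rewrite pnatr_eq0.
have [V0 [V1 [hd [hf [hc0 hc1]]]]] :=
  @grading _ (fun z : R[i] => zpar (z / 2)) 2
    (fun z => ltac:(by rewrite /= mulrDl divff // zparD1))
    (fun z => ltac:(by rewrite /= mulrDl mulNr divff // zparB1)) _ (h^T).
exists V0, V1; split => //; split => //.
split.
  move=> X [tX EX].
  have e := hbr H X tH tX; rewrite hL0 // r0 /lie_br in e.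
  have hx : h *m r X = r X *m h by apply/eqP; rewrite -subr_eq0 -e.
  apply: hc0; by rewrite -!trmx_mul hx.
move=> X [tX EX].
have [Xp [Xm [tp [tm [eX [bp bm]]]]]] := hL1 X tX EX.
have rX : r X = 2^-1 *: r Xp + 2^-1 *: r Xm.
  rewrite eX hlin ?hsc //; by rewrite /in_sl mxtraceZ tm mulr0.
have shift : forall Y c, \tr Y = 0 -> lie_br H Y = c *: Y ->
    (r Y)^T *m h^T = (h^T + c%:M) *m (r Y)^T.
  move=> Y c tY e; have e2 := hbr H Y tH tY; rewrite e hsc // in e2.
  have -> : h^T + c%:M = (h + c%:M)^T by rewrite raddfD /= tr_scalar_mx.
  rewrite -!trmx_mul; congr (_^T).
  by rewrite mulmxDr mul_mx_scalar e2 /lie_br addrC subrK.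
have [p0 p1] := hc1 _ 2 (or_introl erefl) (shift _ _ tp bp).
have [m0 m1] := hc1 _ (- 2) (or_intror erefl) (shift _ _ tm bm).
rewrite /maps_into rX raddfD /= !linearZ /= !mulmxDr -!scalemxAr.
by split; apply: addmx_sub; apply: scalemx_sub.
Qed.
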